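(* $C_{AD}(3,4)=C_{CD}(3,4)=4$.
   Context: There are $n$ nodes labeled $1,\dots,n$ (here $n=3$); node $i$ privately holds an input $x_i\in\{1,\dots,M\}$ (here $M=4$). Communication is over private point-to-point links of a fully connected synchronous network. A deterministic protocol $P$ is a fixed finite schedule of steps $l=1,\dots,L(P)$; in step $l$ a prescribed node $T_l$ sends to a prescribed node $R_l\neq T_l$ one symbol $f_l(x_{T_l},T_l^+(l))$, where $T_l^+(l)$ is the sequence of symbols $T_l$ has received in steps $1,\dots,l-1$; only $R_l$ receives it. Its complexity is $C(P)=\sum_{l}\log_2 S_l(P)$, with $S_l(P)$ the number of distinct values of the step-$l$ symbol over all inputs in $\{1,\dots,M\}^n$. At the end each node $i$ outputs a bit $EQ_i$ depending on $x_i$ and the symbols it received. $P$ solves MEQ-AD$(n,M)$ if for every input, $EQ_1=\cdots=EQ_n=0$ iff $x_1=\cdots=x_n$; $P$ solves MEQ-CD$(n,M)$ if for every input, $EQ_n=0$ iff $x_1=\cdots=x_n$. $C_{AD}(n,M)$ and $C_{CD}(n,M)$ are the infima of $C(P)$ over protocols solving MEQ-AD$(n,M)$, respectively MEQ-CD$(n,M)$. *)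

(* Defs.v *)
From Stdlib Require Import Reals.
From mathcomp Require Import all_boot.
Set Implicit Arguments. Unset Strict Implicit. Unset Printing Implicit Defensive.

(* Nodes are 'I_n (node i+1 of the paper is ordinal i); inputs are 'I_M
   (value k of 'I_M stands for the paper's input k+1 in {1,...,M}).
   Symbols are natural numbers (w.l.o.g.: only the number of distinct
   values matters). *)

(* One step: transmitter T, receiver R, and the symbol function f of
   (x_T, sequence of symbols received by T so far). *)
Record step (n M : nat) := Step {
  st_T : 'I_n;
  st_R : 'I_n;
  st_f : 'I_M -> seq nat -> nat }.

Record protocol (n M : nat) := Protocol {
  steps : seq (step n M);
  outs : 'I_n -> 'I_M -> seq nat -> bool;
  steps_wf : all (fun s => st_T s != st_R s) steps }.

(* history = list of (receiver, symbol) of the steps executed so far *)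
Definition recv {n} (hist : seq ('I_n * nat)) (i : 'I_n) : seq nat :=
  [seq p.2 | p <- hist & p.1 == i].

Fixpoint run_from {n M} (ps : seq (step n M)) (x : {ffun 'I_n -> 'I_M})
    (hist : seq ('I_n * nat)) : seq ('I_n * nat) :=
  match ps with
  | [::] => hist
  | s :: ps' =>
      run_from ps' x
        (rcons hist (st_R s, st_f s (x (st_T s)) (recv hist (st_T s))))
  end.

Definition trace {n M} (P : protocol n M) (x : {ffun 'I_n -> 'I_M}) :=
  run_from (steps P) x [::].

(* symbol sent at step l (0-based) on input x *)
Definition symbol {n M} (P : protocol n M) (l : nat) (x : {ffun 'I_n -> 'I_M}) : nat :=
  nth 0 [seq p.2 | p <- trace P x] l.

Definition S_l {n M} (P : protocol n M) (l : nat) : nat :=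
  size (undup [seq symbol P l x | x <- enum {ffun 'I_n -> 'I_M}]).

Definition log2R (r : R) : R := Rdiv (ln r) (ln (INR 2)).

Definition cost {n M} (P : protocol n M) : R :=
  \big[Rplus/R0]_(l < size (steps P)) log2R (INR (S_l P l)).

Definition EQ {n M} (P : protocol n M) (x : {ffun 'I_n -> 'I_M}) (i : 'I_n) : bool :=
  outs P i (x i) (recv (trace P x) i).

Definition all_equal {n M} (x : {ffun 'I_n -> 'I_M}) : Prop :=
  forall i j : 'I_n, x i = x j.

Definition solves_AD {n M} (P : protocol n M) : Prop :=
  forall x : {ffun 'I_n -> 'I_M},
    (forall i, EQ P x i = false) <-> all_equal x.

Definition solves_CD {n M} (P : protocol n.+1 M) : Prop :=
  forall x : {ffun 'I_n.+1 -> 'I_M},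
    EQ P x ord_max = false <-> all_equal x.

Definition is_infimum (E : R -> Prop) (m : R) : Prop :=
  (forall c, E c -> Rle m c) /\
  (forall m', (forall c, E c -> Rle m' c) -> Rle m' m).

Definition C_AD_is (n M : nat) (v : R) : Prop :=
  is_infimum (fun c => exists P : protocol n M, solves_AD P /\ c = cost P) v.

Definition C_CD_is (n M : nat) (v : R) : Prop :=
  is_infimum (fun c => exists P : protocol n.+1 M, solves_CD P /\ c = cost P) v.

(* Main.v *)
Require Import Defs.
From Stdlib Require Import Reals Lra.
From mathcomp Require Import all_boot.
Set Implicit Arguments. Unset Strict Implicit. Unset Printing Implicit Defensive.

Definition K (T : eqType) (g : 'I_4 -> T) := size (undup (map g (enum 'I_4))).
Definition Kn (f : nat -> nat) := size (undup (map f (iota 0 4))).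
Definition vecn' (T : eqType) (f : nat -> T) : seq nat :=
  map (fun n => find (fun d => f d == f n) (iota 0 4)) (iota 0 4).
Definition notrin (f1 f2 f3 : nat -> nat) :=
  all (fun x1 => all (fun x2 => all (fun x3 =>
     [&& f1 x1 == f1 x2, f2 x1 == f2 x3 & f3 x2 == f3 x3] ==> (x1 == x2) && (x2 == x3))
   (iota 0 4)) (iota 0 4)) (iota 0 4).
Definition Cnat : seq (seq nat) :=
[:: [:: 0; 0; 0; 0]; [:: 0; 0; 0; 3]; [:: 0; 0; 2; 0]; [:: 0; 0; 2; 2]; [:: 0; 0; 2; 3]; [:: 0; 1; 0; 0]; [:: 0; 1; 0; 1]; [:: 0; 1; 0; 3]; [:: 0; 1; 1; 0]; [:: 0; 1; 1; 1]; [:: 0; 1; 1; 3]; [:: 0; 1; 2; 0]; [:: 0; 1; 2; 1]; [:: 0; 1; 2; 2]; [:: 0; 1; 2; 3]].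

Lemma check_good : all (fun v1 => all (fun v2 => all (fun v3 =>
   notrin (nth 0 v1) (nth 0 v2) (nth 0 v3) ==>
   (16 <= Kn (nth 0 v1) * Kn (nth 0 v2) * Kn (nth 0 v3))) Cnat) Cnat) Cnat.
Proof. by vm_compute. Qed.

Lemma check_mem : all (fun a => all (fun b => all (fun c => all (fun d =>
   (vecn' (nth 0 [:: a; b; c; d]) == [:: a; b; c; d]) ==> ([:: a; b; c; d] \in Cnat))
   (iota 0 4)) (iota 0 4)) (iota 0 4)) (iota 0 4).
Proof. by vm_compute. Qed.

Lemma size_undup_kern (A T T' : eqType) (s : seq A) (f : A -> T) (f' : A -> T') :
  {in s &, forall a b, (f a == f b) = (f' a == f' b)} ->
  size (undup (map f s)) = size (undup (map f' s)).
Proof.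
elim: s => //= x s IH H.
have H' : {in s &, forall a b, (f a == f b) = (f' a == f' b)}.
  by move=> a b ha hb; apply: H; rewrite inE ?ha ?hb orbT.
have E : (f x \in map f s) = (f' x \in map f' s).
  apply/mapP/mapP => -[y ys ey]; exists y => //; apply/eqP.
  - by rewrite -H ?inE ?eqxx ?ys ?orbT // ey.
  - by rewrite H ?inE ?eqxx ?ys ?orbT // ey.
by rewrite E; case: ifP => _ /=; rewrite IH.
Qed.

Lemma find_in (A : eqType) (p q : pred A) (s : seq A) :
  {in s, p =1 q} -> find p s = find q s.
Proof.
elim: s => //= x s IH H.
rewrite (H x (mem_head _ _)) IH //.
by move=> y ys; apply: H; rewrite inE ys orbT.
Qed.

Lemma vecn_ext (T T' : eqType) (f : nat -> T) (f' : nat -> T') :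
  {in iota 0 4 &, forall a b, (f a == f b) = (f' a == f' b)} -> vecn' f = vecn' f'.
Proof.
move=> H; apply/eq_in_map => n hn; apply: find_in => d hd; exact: H.
Qed.

Section Bridge.
Variables (T : eqType) (g : 'I_4 -> T).
Let G (n : nat) := g (inord n).

Lemma nth_vecn a : a < 4 -> nth 0 (vecn' G) a = find (fun d => G d == G a) (iota 0 4).
Proof. by move=> ha; rewrite /vecn' (nth_map 0) ?size_iota // nth_iota. Qed.

Lemma kernA a b : a < 4 -> b < 4 ->
  (G a == G b) = (nth 0 (vecn' G) a == nth 0 (vecn' G) b).
Proof.
move=> ha hb; rewrite !nth_vecn //.
apply/eqP/eqP => [E|E]; first by rewrite E.
have hasa : has (fun d => G d == G a) (iota 0 4).
  by apply/hasP; exists a; rewrite ?mem_iota ?eqxx.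
have hasb : has (fun d => G d == G b) (iota 0 4).
  by apply/hasP; exists b; rewrite ?mem_iota ?eqxx.
move: (nth_find 0 hasa) (nth_find 0 hasb); rewrite E => /eqP <- /eqP ->.
done.
Qed.

Lemma vecn_small y : y \in vecn' G -> y < 4.
Proof.
case/mapP => n; rewrite mem_iota => /andP[_] hn ->.
have : has (fun d => G d == G n) (iota 0 4).
  by apply/hasP; exists n; rewrite ?mem_iota ?eqxx.
by rewrite has_find size_iota.
Qed.

Lemma vecn_fix : vecn' (nth 0 (vecn' G)) = vecn' G.
Proof.
apply: vecn_ext => a b; rewrite !mem_iota => /andP[_ ha] /andP[_ hb].
by rewrite kernA.
Qed.

Lemma vecn_Cnat : vecn' G \in Cnat.
Proof.
have hs : size (vecn' G) = 4 by rewrite size_map size_iota.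
have hsm := vecn_small.
have hf := vecn_fix.
move: hs hsm hf; case: (vecn' G) => [|a [|b [|c [|d [|? ?]]]]] //= _ hsm hf.
have := check_mem; move/allP/(_ a); rewrite mem_iota hsm ?inE ?eqxx //.
move/(_ isT)/allP/(_ b); rewrite mem_iota hsm ?inE ?eqxx ?orbT //.
move/(_ isT)/allP/(_ c); rewrite mem_iota hsm ?inE ?eqxx ?orbT //.
move/(_ isT)/allP/(_ d); rewrite mem_iota hsm ?inE ?eqxx ?orbT //.
by move/(_ isT)/implyP; apply; rewrite hf.
Qed.

Lemma K_bridge : K g = Kn (nth 0 (vecn' G)).
Proof.
rewrite /K /Kn.
have -> : map g (enum 'I_4) = map G (iota 0 4).
  by rewrite -val_enum_ord -map_comp; apply: eq_map => i /=; rewrite /G inord_val.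
apply: size_undup_kern => a b; rewrite !mem_iota => /andP[_ ha] /andP[_ hb].
exact: kernA.
Qed.

Lemma G_eq a b : a < 4 -> b < 4 -> nth 0 (vecn' G) a = nth 0 (vecn' G) b ->
  g (inord a) = g (inord b).
Proof. by move=> ha hb /eqP; rewrite -kernA // => /eqP. Qed.
End Bridge.

Lemma comb3 (T1 T2 T3 : eqType) (g1 : 'I_4 -> T1) (g2 : 'I_4 -> T2) (g3 : 'I_4 -> T3) :
  (forall a b c, g1 a = g1 b -> g2 a = g2 c -> g3 b = g3 c -> a = b /\ b = c) ->
  16 <= K g1 * K g2 * K g3.
Proof.
move=> H; rewrite !K_bridge.
have := check_good; move/allP/(_ _ (vecn_Cnat g1))/allP/(_ _ (vecn_Cnat g2)).
move/allP/(_ _ (vecn_Cnat g3))/implyP; apply.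
apply/allP => x1; rewrite mem_iota => /andP[_] h1.
apply/allP => x2; rewrite mem_iota => /andP[_] h2.
apply/allP => x3; rewrite mem_iota => /andP[_] h3.
apply/implyP => /and3P [/eqP e1 /eqP e2 /eqP e3].
have [E1 E2] := H _ _ _ (G_eq h1 h2 e1) (G_eq h1 h3 e2) (G_eq h2 h3 e3).
have F1 : x1 = x2 by move: (congr1 (@nat_of_ord 4) E1); rewrite !inordK.
have F2 : x2 = x3 by move: (congr1 (@nat_of_ord 4) E2); rewrite !inordK.
by rewrite F1 F2 eqxx.
Qed.

Definition o0 : 'I_3 := @Ordinal 3 0 isT.
Definition o1 : 'I_3 := @Ordinal 3 1 isT.
Definition o2 : 'I_3 := @Ordinal 3 2 isT.

Definition ec (c : 'I_4) : {ffun 'I_3 -> 'I_4} := [ffun _ => c].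

Fixpoint syms (ps : seq (step 3 4)) (y : {ffun 'I_3 -> 'I_4}) (h : seq ('I_3 * nat)) : seq nat :=
  match ps with
  | [::] => [::]
  | s :: ps' => let v := st_f s (y (st_T s)) (recv h (st_T s)) in
                v :: syms ps' y (rcons h (st_R s, v))
  end.

Lemma run_syms ps y h :
  [seq p.2 | p <- run_from ps y h] = [seq p.2 | p <- h] ++ syms ps y h.
Proof.
elim: ps h => [|s ps IH] h /=; first by rewrite cats0.
by rewrite IH map_rcons -cats1 -catA.
Qed.

Lemma symbolE (P : protocol 3 4) l y : symbol P l y = nth 0 (syms (steps P) y [::]) l.
Proof. by rewrite /symbol /trace run_syms. Qed.

Lemma recv_rcons (h : seq ('I_3 * nat)) r v j :
  recv (rcons h (r, v)) j = recv h j ++ (if r == j then [:: v] else [::]).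
Proof.
rewrite /recv filter_rcons /=; case: ifP => _; first by rewrite map_rcons cats1.
by rewrite cats0.
Qed.

Definition ds : step 3 4 := Step o0 o0 (fun _ _ => 0).

Lemma key ps (x : {ffun 'I_3 -> 'I_4}) h (hc : 'I_4 -> seq ('I_3 * nat)) :
  (forall i, recv h i = recv (hc (x i)) i) ->
  (forall l, l < size ps ->
     nth 0 (syms ps (ec (x (st_T (nth ds ps l)))) (hc (x (st_T (nth ds ps l))))) l =
     nth 0 (syms ps (ec (x (st_R (nth ds ps l)))) (hc (x (st_R (nth ds ps l))))) l) ->
  forall i, recv (run_from ps x h) i = recv (run_from ps (ec (x i)) (hc (x i))) i.
Proof.
elim: ps h hc => [|s ps IH] h hc Hinv Hc i /=; first exact: Hinv.
apply: (IH _ (fun c => rcons (hc c) (st_R s, st_f s (ec c (st_T s)) (recv (hc c) (st_T s))))).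
- move=> j; rewrite !recv_rcons Hinv.
  case: eqP => // <-; congr (_ ++ [:: _]).
  have := Hc 0 isT; rewrite /= !ffunE => <-.
  by rewrite -Hinv.
- by move=> l hl; exact: (Hc l.+1 hl).
Qed.

Lemma trace_key (P : protocol 3 4) (x : {ffun 'I_3 -> 'I_4}) :
  (forall l, l < size (steps P) ->
     symbol P l (ec (x (st_T (nth ds (steps P) l)))) =
     symbol P l (ec (x (st_R (nth ds (steps P) l))))) ->
  forall i, recv (trace P x) i = recv (trace P (ec (x i))) i.
Proof.
move=> H i; rewrite /trace.
apply: (key (hc := fun _ => [::])) => // l hl.
by rewrite -!symbolE; apply: H.
Qed.

Lemma map_eq_in (F F' : nat -> nat) (s : seq nat) :
  [seq F l | l <- s] = [seq F' l | l <- s] -> forall l, l \in s -> F l = F' l.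
Proof.
elim: s => //= y s IH [e1 e2] l; rewrite inE => /orP [/eqP -> //|]; exact: IH.
Qed.

Lemma K_le1 (T : eqType) (a : T) : K (fun _ : 'I_4 => a) <= 1.
Proof.
rewrite /K; have -> : 1 = size [:: a] by [].
apply: uniq_leq_size; first exact: undup_uniq.
by move=> y; rewrite mem_undup => /mapP [? _ ->]; rewrite inE.
Qed.

Lemma K_pos (T : eqType) (g : 'I_4 -> T) : 0 < K g.
Proof.
rewrite /K; have : g ord0 \in undup (map g (enum 'I_4)).
  by rewrite mem_undup map_f ?mem_enum.
by case: (undup _).
Qed.

Lemma K_pair (T1 T2 : eqType) (f1 : 'I_4 -> T1) (f2 : 'I_4 -> T2) :
  K (fun c => (f1 c, f2 c)) <= K f1 * K f2.
Proof.
rewrite /K -(size_allpairs pair); apply: uniq_leq_size; first exact: undup_uniq.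
move=> y; rewrite mem_undup => /mapP [c _ ->].
apply/allpairsP; exists (f1 c, f2 c) => /=.
by rewrite !mem_undup !(map_f _ (mem_enum _ c)).
Qed.

Lemma K_tuple (s : seq nat) (F : nat -> 'I_4 -> nat) :
  K (fun c => [seq F l c | l <- s]) <= \prod_(l <- s) K (F l).
Proof.
elim: s => [|y s IH]; first by rewrite big_nil; apply: K_le1.
rewrite big_cons; apply: leq_trans (leq_mul (leqnn _) IH).
apply: leq_trans (K_pair _ _).
rewrite /K; apply: eq_leq; apply: size_undup_kern => a b _ _.
by rewrite /= eqseq_cons xpair_eqE.
Qed.

Lemma prod_disj (s : seq nat) (P Q : pred nat) (F : nat -> nat) :
  (forall l, P l && Q l = false) ->
  \prod_(l <- s | P l) F l * \prod_(l <- s | Q l) F l = \prod_(l <- s | P l || Q l) F l.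
Proof.
move=> D; elim: s => [|y s IH]; first by rewrite !big_nil.
rewrite !big_cons; have := D y.
case: (P y); case: (Q y) => //= _; rewrite -IH.
- by rewrite mulnA.
- by rewrite mulnCA.
Qed.

Lemma prod_sub (s : seq nat) (P : pred nat) (F : nat -> nat) :
  (forall l, 0 < F l) -> \prod_(l <- s | P l) F l <= \prod_(l <- s) F l.
Proof.
move=> Fp; elim: s => [|y s IH]; first by rewrite !big_nil.
rewrite !big_cons; case: (P y); first by rewrite leq_mul2l IH orbT.
exact: leq_trans IH (leq_pmull _ (Fp y)).
Qed.

Lemma K_S (P : protocol 3 4) l : K (fun c => symbol P l (ec c)) <= S_l P l.
Proof.
rewrite /K /S_l; apply: uniq_leq_size; first exact: undup_uniq.
move=> y; rewrite !mem_undup => /mapP [c _ ->].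
by apply: map_f; rewrite mem_enum.
Qed.

Lemma lower (P : protocol 3 4) :
  (forall x, (forall i, recv (trace P x) i = recv (trace P (ec (x i))) i) -> all_equal x) ->
  16 <= \prod_(l < size (steps P)) S_l P l.
Proof.
move=> H.
set N := size (steps P).
pose T l := st_T (nth ds (steps P) l).
pose R l := st_R (nth ds (steps P) l).
pose v l (c : 'I_4) := symbol P l (ec c).
pose e01 : pred nat := fun l => ((T l == o0) && (R l == o1)) || ((T l == o1) && (R l == o0)).
pose e02 : pred nat := fun l => ((T l == o0) && (R l == o2)) || ((T l == o2) && (R l == o0)).
pose e12 : pred nat := fun l => ((T l == o1) && (R l == o2)) || ((T l == o2) && (R l == o1)).
pose g01 c := [seq v l c | l <- [seq l <- iota 0 N | e01 l]].
pose g02 c := [seq v l c | l <- [seq l <- iota 0 N | e02 l]].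
pose g12 c := [seq v l c | l <- [seq l <- iota 0 N | e12 l]].
have tri : forall a b c, g01 a = g01 b -> g02 a = g02 c -> g12 b = g12 c -> a = b /\ b = c.
  move=> a b c E1 E2 E3.
  pose x := [ffun i : 'I_3 => if i == o0 then a else if i == o1 then b else c].
  have hx : all_equal x.
    apply: H; apply: trace_key => l hl.
    have hl' : forall e : pred nat, e l -> l \in [seq l <- iota 0 N | e l].
      by move=> e he; rewrite mem_filter he mem_iota leq0n add0n hl.
    have F1 : e01 l -> v l a = v l b by move=> he; exact: (map_eq_in E1 (hl' _ he)).
    have F2 : e02 l -> v l a = v l c by move=> he; exact: (map_eq_in E2 (hl' _ he)).
    have F3 : e12 l -> v l b = v l c by move=> he; exact: (map_eq_in E3 (hl' _ he)).
    move: F1 F2 F3; rewrite /e01 /e02 /e12 /v -/(T l) -/(R l).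
    case: (T l) => [[|[|[|?]]] ?]; case: (R l) => [[|[|[|?]]] ?] //=;
      rewrite !ffunE /=; move=> F1 F2 F3;
      first [ done | by rewrite F1 | by rewrite F2 | by rewrite F3
            | by rewrite -F1 | by rewrite -F2 | by rewrite -F3 ].
  have h1 := hx o0 o1; have h2 := hx o1 o2.
  by rewrite !ffunE /= in h1 h2.
have hc := comb3 tri.
have hsub : forall e : pred nat, K (fun c => [seq v l c | l <- [seq l <- iota 0 N | e l]])
                   <= \prod_(l <- iota 0 N | e l) K (v l).
  by move=> e; rewrite -big_filter; apply: K_tuple.
apply: (leq_trans hc); apply: leq_trans (leq_mul (leq_mul (hsub e01) (hsub e02)) (hsub e12)) _.
have D1 : forall l, e01 l && e02 l = false.
  move=> l; rewrite /e01 /e02.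
  by case: (T l) => [[|[|[|?]]] ?]; case: (R l) => [[|[|[|?]]] ?].
have D2 : forall l, (e01 l || e02 l) && e12 l = false.
  move=> l; rewrite /e01 /e02 /e12.
  by case: (T l) => [[|[|[|?]]] ?]; case: (R l) => [[|[|[|?]]] ?].
rewrite (prod_disj _ _ D1) (prod_disj _ _ D2).
apply: leq_trans (prod_sub _ _ (fun l => K_pos (v l))) _.
have -> : iota 0 N = index_iota 0 N by rewrite /index_iota subn0.
rewrite big_mkord; apply: leq_prod => l _; exact: K_S.
Qed.

Lemma ln2_pos : Rlt 0 (ln (INR 2)).
Proof. rewrite -ln_1; apply: ln_increasing; simpl; lra. Qed.

Lemma sum_log (s : seq nat) (F : nat -> nat) : (forall l, 0 < F l) ->
  \big[Rplus/R0]_(l <- s) log2R (INR (F l)) = log2R (INR (\prod_(l <- s) F l)).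
Proof.
move=> Fp; elim: s => [|y s IH].
  by rewrite !big_nil /log2R /= ln_1 /Rdiv Rmult_0_l.
rewrite !big_cons IH.
have -> : INR (F y * \prod_(l <- s) F l) = Rmult (INR (F y)) (INR (\prod_(l <- s) F l)).
  by rewrite -mult_INR.
have h1 : Rlt 0 (INR (F y)) by apply: lt_0_INR; apply/ltP; exact: Fp.
have h2 : Rlt 0 (INR (\prod_(l <- s) F l)).
  by apply: lt_0_INR; apply/ltP; apply: prodn_gt0.
rewrite /log2R ln_mult //; rewrite /Rdiv; ring.
Qed.

Lemma ln_le' x y : Rlt 0 x -> Rle x y -> Rle (ln x) (ln y).
Proof.
move=> hx hxy; case: (Rle_lt_or_eq_dec _ _ hxy) => [h|->]; last exact: Rle_refl.
by apply: Rlt_le; apply: ln_increasing.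
Qed.

Lemma ln16 : ln (INR 16) = Rmult (INR 4) (ln (INR 2)).
Proof.
have -> : INR 16 = pow (INR 2) 4 by rewrite -pow_INR.
by rewrite ln_pow //; apply: lt_0_INR; apply/ltP.
Qed.

Lemma log2R_16 : log2R (INR 16) = INR 4.
Proof.
rewrite /log2R ln16; field; apply: Rgt_not_eq; exact: ln2_pos.
Qed.

Lemma log2R_ge (p : nat) : 16 <= p -> Rle (INR 4) (log2R (INR p)).
Proof.
move=> hp; rewrite -log2R_16 /log2R /Rdiv.
apply: Rmult_le_compat_r; first by apply: Rlt_le; apply: Rinv_0_lt_compat; exact: ln2_pos.
apply: ln_le'; first by apply: lt_0_INR; apply/ltP.
by apply: le_INR; apply/leP.
Qed.

Lemma S_pos (P : protocol 3 4) l : 0 < S_l P l.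
Proof.
rewrite /S_l; have : symbol P l (ec ord0) \in undup [seq symbol P l x | x <- enum {ffun 'I_3 -> 'I_4}].
  by rewrite mem_undup map_f ?mem_enum.
by case: (undup _).
Qed.

Lemma cost_prod (P : protocol 3 4) :
  cost P = log2R (INR (\prod_(l < size (steps P)) S_l P l)).
Proof.
rewrite /cost -(big_mkord xpredT (fun l => log2R (INR (S_l P l)))).
rewrite -(big_mkord xpredT (fun l => S_l P l)).
by apply: sum_log => l; exact: S_pos.
Qed.

Lemma S4 (P : protocol 3 4) l (i : 'I_3) : (forall x, symbol P l x = val (x i)) -> S_l P l = 4.
Proof.
move=> H; rewrite /S_l (eq_map H).
rewrite -(size_iota 0 4); apply: perm_size; apply: uniq_perm; rewrite ?undup_uniq ?iota_uniq //.
move=> y; rewrite mem_undup mem_iota add0n leq0n /=; apply/mapP/idP => [[x _ ->]|hy].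
  exact: ltn_ord.
by exists (ec (inord y)); rewrite ?mem_enum // ffunE inordK.
Qed.

Lemma all_equal3 (x : {ffun 'I_3 -> 'I_4}) : x o0 = x o1 -> x o1 = x o2 -> all_equal x.
Proof.
move=> h1 h2.
have Hk : forall k : 'I_3, x k = x o0.
  case=> [[|[|[|?]]] p] //.
  - by rewrite (_ : Ordinal p = o0) //; apply: val_inj.
  - by rewrite (_ : Ordinal p = o1) //; apply: val_inj.
  - by rewrite h1 (_ : Ordinal p = o2) //; apply: val_inj.
by move=> i j; rewrite !Hk.
Qed.

Definition stepsA : seq (step 3 4) :=
  [:: Step o0 o1 (fun a _ => val a); Step o1 o2 (fun a _ => val a)].
Definition PA : protocol 3 4 :=
  @Protocol 3 4 stepsA (fun i a r => (i != o0) && (nth 0 r 0 != val a)) isT.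

Definition stepsC : seq (step 3 4) :=
  [:: Step o0 o2 (fun a _ => val a); Step o1 o2 (fun a _ => val a)].
Definition PC : protocol 3 4 :=
  @Protocol 3 4 stepsC (fun i a r => ~~ ((nth 0 r 0 == val a) && (nth 0 r 1 == val a))) isT.

Lemma traceA x : trace PA x = [:: (o1, val (x o0)); (o2, val (x o1))].
Proof. by []. Qed.
Lemma traceC x : trace PC x = [:: (o2, val (x o0)); (o2, val (x o1))].
Proof. by []. Qed.

Lemma costA : cost PA = INR 4.
Proof.
rewrite cost_prod /= !big_ord_recr big_ord0 /=.
rewrite (@S4 PA 0 o0) ?(@S4 PA 1 o1) ?log2R_16 //.
all: by move=> x; rewrite /symbol traceA.
Qed.

Lemma costC : cost PC = INR 4.
Proof.
rewrite cost_prod /= !big_ord_recr big_ord0 /=.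
rewrite (@S4 PC 0 o0) ?(@S4 PC 1 o1) ?log2R_16 //.
all: by move=> x; rewrite /symbol traceC.
Qed.

Lemma solvesA : solves_AD PA.
Proof.
move=> x; rewrite /EQ traceA; split.
  move=> H; have h1 := H o1; have h2 := H o2; rewrite /= in h1 h2.
  apply: all_equal3; apply: val_inj.
  - by move/negbFE/eqP: h1.
  - by move/negbFE/eqP: h2.
move=> He; have h1 := He o0 o1; have h2 := He o1 o2.
case=> [[|[|[|?]]] p] //=.
- by rewrite (_ : Ordinal p = o1); [rewrite h1 eqxx | apply: val_inj].
- by rewrite (_ : Ordinal p = o2); [rewrite h2 eqxx | apply: val_inj].
Qed.

Lemma solvesC : solves_CD PC.
Proof.
have Eo : (ord_max : 'I_3) = o2 by apply: val_inj.
move=> x; rewrite /EQ traceC /= Eo; split.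
  move/negbFE/andP=> [/eqP h1 /eqP h2]; apply: all_equal3; apply: ord_inj; [by rewrite h1 h2 | exact: h2].
move=> He; have h1 := He o0 o2; have h2 := He o1 o2.
by rewrite h1 h2 !eqxx.
Qed.

Lemma EQ_ec (P : protocol 3 4) x i :
  (forall i, recv (trace P x) i = recv (trace P (ec (x i))) i) ->
  EQ P x i = EQ P (ec (x i)) i.
Proof. by move=> H; rewrite /EQ H ffunE. Qed.

Lemma all_equal_ec c : all_equal (ec c).
Proof. by move=> i j; rewrite !ffunE. Qed.

Theorem mainTheorem9 : C_AD_is 3 4 (INR 4) /\ C_CD_is 2 4 (INR 4).
Proof.
split; split.
- move=> c [P [HP ->]]; rewrite cost_prod; apply: log2R_ge; apply: lower => x Hx.
  apply/HP => i; rewrite (EQ_ec i Hx).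
  exact: (proj2 (HP (ec (x i))) (all_equal_ec _) i).
- by move=> m Hm; apply: Hm; exists PA; split; [exact: solvesA | rewrite costA].
- move=> c [P [HP ->]]; rewrite cost_prod; apply: log2R_ge; apply: lower => x Hx.
  apply/HP; rewrite (EQ_ec ord_max Hx).
  exact: (proj2 (HP (ec (x ord_max))) (all_equal_ec _)).
- by move=> m Hm; apply: Hm; exists PC; split; [exact: solvesC | rewrite costC].
Qed.
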